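(* A graph $G$ has exactly one Grundy dominating set (i.e., is a unique Grundy domination graph) if and only if $G$ has no edges.
   Context: For a graph $G$, $N[v]$ denotes the closed neighborhood of $v$ (the vertex together with its neighbors). A sequence $(v_1,\ldots,v_k)$ of distinct vertices is a closed neighborhood sequence if $N[v_i]\setminus\bigcup_{j=1}^{i-1}N[v_j]\neq\emptyset$ for each $i\in[k]$. The Grundy domination number $\gamma_{gr}(G)$ is the maximum length of a closed neighborhood sequence; the set of vertices of such a maximum-length sequence is a Grundy dominating set. *)

(* Defs.v *)
From mathcomp Require Import all_boot.
Set Implicit Arguments. Unset Strict Implicit. Unset Printing Implicit Defensive.

Definition simple_graph (T : finType) (e : rel T) : Prop :=
  symmetric e /\ irreflexive e.

Definition cnbhd (T : finType) (e : rel T) (v : T) : {set T} :=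
  [set u | (u == v) || e v u].

Definition cnbhd_seq (T : finType) (e : rel T) (s : seq T) : {set T} :=
  \bigcup_(v <- s) cnbhd e v.

Definition is_cn_seq (T : finType) (e : rel T) (s : seq T) : Prop :=
  uniq s /\
  forall (s1 s2 : seq T) (v : T), s = s1 ++ v :: s2 ->
    cnbhd e v :\: cnbhd_seq e s1 != set0.

Definition is_grundy_number (T : finType) (e : rel T) (k : nat) : Prop :=
  (exists s, is_cn_seq e s /\ size s = k) /\
  (forall s, is_cn_seq e s -> size s <= k).

Definition grundy_dominating_set (T : finType) (e : rel T) (D : {set T}) : Prop :=
  exists s, is_cn_seq e s /\ D = [set x in s] /\
    (forall t, is_cn_seq e t -> size t <= size s).

Definition unique_grundy_domination (T : finType) (e : rel T) : Prop :=
  exists D, grundy_dominating_set e D /\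
    forall D', grundy_dominating_set e D' -> D' = D.

Definition edgeless (T : finType) (e : rel T) : Prop :=
  forall u v : T, ~~ e u v.

(* Main.v *)
Require Import Defs.
From mathcomp Require Import all_boot.
Set Implicit Arguments. Unset Strict Implicit. Unset Printing Implicit Defensive.

Section Aux.
Variables (T : finType) (e : rel T).

Fixpoint cnb (A : {set T}) (s : seq T) : bool :=
  match s with
  | [::] => true
  | v :: s' => (cnbhd e v :\: A != set0) && cnb (A :|: cnbhd e v) s'
  end.

Lemma cnbhd_seq_cons v s : cnbhd_seq e (v :: s) = cnbhd e v :|: cnbhd_seq e s.
Proof. by rewrite /cnbhd_seq big_cons. Qed.

Lemma cnbhd_seq_cat s t : cnbhd_seq e (s ++ t) = cnbhd_seq e s :|: cnbhd_seq e t.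
Proof. by rewrite /cnbhd_seq big_cat. Qed.

Lemma in_cnbhd_seq x s : (x \in cnbhd_seq e s) = has (fun v => x \in cnbhd e v) s.
Proof.
elim: s => [|v s IH]; first by rewrite /cnbhd_seq big_nil inE.
by rewrite cnbhd_seq_cons inE IH.
Qed.

Lemma cnb_aux s p :
  (forall (s1 s2 : seq T) (v : T), s = s1 ++ v :: s2 ->
    cnbhd e v :\: cnbhd_seq e (p ++ s1) != set0) <-> cnb (cnbhd_seq e p) s.
Proof.
elim: s p => [|v s IH] p /=.
  by split=> // _ [|? ?] ? ?.
split.
  move=> H; apply/andP; split.
    by have := H [::] s v erefl; rewrite cats0.
  have -> : cnbhd_seq e p :|: cnbhd e v = cnbhd_seq e (rcons p v).
    by rewrite -cats1 cnbhd_seq_cat cnbhd_seq_cons /cnbhd_seq big_nil setU0.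
  apply/IH => s1 s2 w Hs.
  by rewrite -cats1 -catA /=; apply: (H (v :: s1)); rewrite Hs.
move=> /andP [H1 H2] [|x s1] s2 w /=.
  by case=> <- _; rewrite cats0.
case=> <- Hs.
have E : cnbhd_seq e p :|: cnbhd e v = cnbhd_seq e (rcons p v).
  by rewrite -cats1 cnbhd_seq_cat cnbhd_seq_cons /cnbhd_seq big_nil setU0.
rewrite E in H2.
have := (IH (rcons p v)).2 H2 s1 s2 w Hs.
by rewrite -cats1 -catA.
Qed.

Lemma cnP s : is_cn_seq e s <-> uniq s /\ cnb set0 s.
Proof.
have E : cnbhd_seq e [::] = set0 by rewrite /cnbhd_seq big_nil.
split.
  case=> U H; split=> //; rewrite -E; apply/(cnb_aux s [::]) => s1 s2 v Hs.
  exact: H Hs.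
case=> U H; split=> // s1 s2 v Hs.
rewrite -E in H; exact: ((cnb_aux s [::]).2 H s1 s2 v Hs).
Qed.

Lemma cnb_cat A a b : cnb A (a ++ b) = cnb A a && cnb (A :|: cnbhd_seq e a) b.
Proof.
elim: a A => [|v a IH] A /=.
  by rewrite /cnbhd_seq big_nil setU0.
by rewrite IH cnbhd_seq_cons setUA andbA.
Qed.

Lemma iso_cnb (A : {set T}) b : (forall z, z \in b -> forall x, ~~ e z x) -> uniq b ->
  (forall z, z \in b -> z \notin A) -> cnb A b.
Proof.
elim: b A => [|z b IH] A //= Hi /andP [zb U] HA.
have Ez : cnbhd e z = [set z].
  apply/setP=> u; rewrite !inE; have := Hi z (mem_head _ _) u.
  by case: (e z u); rewrite ?orbF.
apply/andP; split.
  apply/set0Pn; exists z; rewrite Ez !inE eqxx andbT.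
  exact: HA (mem_head _ _).
apply: IH => //.
  by move=> y yb; apply: Hi; rewrite inE yb orbT.
move=> y yb; rewrite Ez !inE negb_or HA ?inE ?yb ?orbT //=.
by apply/eqP=> Eyz; rewrite -Eyz yb in zb.
Qed.

Lemma split_last (P : pred T) s : has (predC P) s ->
  exists a v b, [/\ s = a ++ v :: b, ~~ P v & all P b].
Proof.
elim/last_ind: s => [|s x IH] //.
rewrite -cats1 has_cat /= orbF.
case Px: (P x).
  rewrite orbF => /IH [a [v [b [-> Pv Pb]]]].
  exists a, v, (rcons b x); split=> //.
    by rewrite -catA /= cats1.
  by rewrite all_rcons Px.
move=> _; exists s, x, [::]; split=> //; by rewrite Px.
Qed.

End Aux.

Theorem corollary4p3 (T : finType) (e : rel T) :
  simple_graph e ->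
  (unique_grundy_domination e <-> edgeless e).
Proof.
case=> Hsym Hirr.
pose iso := fun x : T => [forall y, ~~ e x y].
have isoP : forall x, iso x -> forall y, ~~ e x y.
  by move=> x /forallP.
split.
  case=> D [[s [Hs [HD Hmax]]] Huniq] u v.
  apply/negP=> Euv.
  have [U Hc] := (cnP e s).1 Hs.
  case Hh: (has (predC iso) s); last first.
    have Hall : all iso s by move/negbT: Hh; rewrite has_predC negbK.
    have Hu : ~~ iso u by apply/forallP => /(_ v); rewrite Euv.
    have us : u \notin s.
      by apply/negP=> us; move/allP: Hall => /(_ u us); rewrite (negbTE Hu).
    have : is_cn_seq e (s ++ [:: u]).
      apply/cnP; split.
        by rewrite cat_uniq U /= andbT orbF.
      rewrite cnb_cat Hc /= andbT; apply/set0Pn; exists u.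
      rewrite !inE eqxx andbT /= in_cnbhd_seq.
      apply/hasPn=> x xs; rewrite inE negb_or.
      have := isoP x (allP Hall x xs) u; move=> ->; rewrite andbT.
      by apply/eqP=> E; rewrite E xs in us.
    by move/Hmax; rewrite size_cat addn1 ltnn.
  have [a [w [b [Es Nw Ib]]]] := split_last Hh.
  rewrite Es cnb_cat /= set0U in Hc.
  case/and3P: Hc => Ha Hw Hb.
  case/set0Pn: Hw => f; rewrite !inE => /andP [fa fw].
  have [y [ey fy]] : exists y, e w y /\ ((f == w) || (f == y)).
    case: (eqVneq f w) => [Efw|Nfw].
      move: Nw; rewrite /iso negb_forall => /existsP [y]; rewrite negbK => ey.
      by exists y; split; rewrite // Efw eqxx.
    by move: fw; rewrite (negbTE Nfw) /= => ef; exists f; split=> //; rewrite eqxx orbT.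
  have ye : e y w by rewrite Hsym.
  have yw : y != w by apply/eqP=> E; rewrite E Hirr in ey.
  have ya : y \notin a.
    apply/negP=> ya; move: fa; rewrite in_cnbhd_seq => /hasPn /(_ y ya).
    rewrite inE; case/orP: fy => /eqP ->; first by rewrite ye orbT.
    by rewrite eqxx.
  have yb : y \notin b.
    apply/negP=> yb; move/allP: Ib => /(_ y yb) /isoP /(_ w).
    by rewrite ye.
  have Ht : is_cn_seq e (a ++ y :: b).
    apply/cnP; split.
      move: U; rewrite Es !cat_uniq /= (negbTE ya) yb /=.
      by case/and4P=> -> /norP [_ ->] _ ->.
    rewrite cnb_cat Ha /= set0U; apply/andP; split.
      apply/set0Pn; exists f; rewrite !inE fa /=.
      by case/orP: fy => /eqP ->; rewrite ?eqxx ?ey ?ye ?orbT.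
    apply: iso_cnb.
    - by move=> z zb; apply: isoP; move/allP: Ib; apply.
    - by move: U; rewrite Es cat_uniq /= => /and4P [].
    move=> z zb; rewrite !inE negb_or; apply/andP; split.
      rewrite in_cnbhd_seq; apply/hasPn=> x xa; rewrite inE negb_or.
      rewrite Hsym; have -> : ~~ e z x by apply: isoP; move/allP: Ib; apply.
      rewrite andbT; apply/eqP=> E; move: U; rewrite Es cat_uniq /= => /and3P [_ H _].
      by move: H; rewrite negb_or => /andP [_ /hasPn /(_ z zb)]; rewrite E xa.
    rewrite negb_or; apply/andP; split.
      by apply/eqP=> E; rewrite -E zb in yb.
    rewrite Hsym; apply: isoP; move/allP: Ib; apply; exact zb.
  have HD' : grundy_dominating_set e [set x in a ++ y :: b].
    exists (a ++ y :: b); split=> //; split=> // t Ht'.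
    by rewrite size_cat /= -(size_cat a (w :: b)) -Es; apply: Hmax.
  have E1 := Huniq _ HD'.
  have : y \in [set x in a ++ y :: b] by rewrite inE mem_cat inE eqxx orbT.
  rewrite E1 HD inE Es mem_cat (negbTE ya) inE (negbTE yw) /=.
  by rewrite (negbTE yb).
move=> Hed.
have Hiso : forall z : T, forall x, ~~ e z x by [].
have cn_uniq : forall s, uniq s -> is_cn_seq e s.
  move=> s U; apply/cnP; split=> //; apply: iso_cnb => // z _; by rewrite inE.
have Gs : forall t, is_cn_seq e t -> size t <= size (enum T).
  move=> t /cnP [U _]; rewrite -cardE -(card_uniqP U); exact: max_card.
exists setT; split.
  exists (enum T); split; first exact: cn_uniq (enum_uniq _).
  split=> //; apply/setP=> x; by rewrite !inE mem_enum.
move=> D' [t [Ht [-> Hm]]].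
have [U _] := (cnP e t).1 Ht.
apply/eqP; rewrite eqEcard subsetT cardsT /=.
have := Hm _ (cn_uniq _ (enum_uniq T)).
rewrite -cardE => H; apply: (leq_trans H).
by rewrite -(card_uniqP U); apply: subset_leq_card; apply/subsetP=> x; rewrite inE.
Qed.
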